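(* Let $P$ be a $\mathcal{V}$-poset, $A$ a maximal antichain of $P$, and let $P\cup\{g\}$ be obtained by adding a new greatest element $g$. For $a\in A$ let $P_a$ be the set related to $a$ computed in $P$ and $P'_a$ the set related to $a$ computed in $P\cup\{g\}$. Then: (i) the number $b(A)$ of basic elements in $A$ is the same in $P$ and in $P\cup\{g\}$; (ii) if $a$ is an upper element, $P'_a=P_a$; (iii) if $a$ is a lower element not associated to the set of all basic elements of $P$, then $P'_a=P_a$; (iv) if $a$ is a lower element associated to the set of all basic elements of $P$, then $P'_a=P_a\cup\{g\}$.
   Context: All posets are finite. A $\mathcal{V}$-poset is a poset generated from the empty poset by repeatedly applying: disjoint union of $\mathcal{V}$-posets, adding a new greatest element, adding a new least element. An element $x$ is basic if: (B.1) there are no two incomparable elements $u,v$ with $x>u$ and $x>v$; (B.2) there are no two incomparable elements $u,v$ with $x<u$ and $x<v$; (B.3) there is no element $u$ with $u<x$ such that for all $w\neq u,x$ one has ($u\ge w\iff x\ge w$) and ($u\le w\iff x\le w$). An element is associated to a set $B$ of basic elements if it is comparable to every element of $B$ and incomparable to every other basic element. A non-basic element $u$ is upper if $u>b$ for some basic $b$, and lower if $u<b$ for some basic $b$. For an element $a$ of a $\mathcal{V}$-poset $Q$, the set related to $a$ in $Q$ is defined as follows: if $a$ is basic, $Q_a=\emptyset$; otherwise let $B$ be the set of basic elements to which $a$ is associated; if $a$ is a lower element, $Q_a=\{b\in Q: a<b,\ \text{there is no } c \text{ with } c<b \text{ and } c \text{ incomparable to } a\}$; if $a$ is an upper element, $Q_a=\{b\in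 Q: a>b,\ \text{there is no } c \text{ with } c>b \text{ and } c \text{ incomparable to } a\}\setminus\{\ell\in Q: \ell \text{ is a lower element associated to } B\}$. *)

(* Defs.v *)
From mathcomp Require Import all_boot.
Set Implicit Arguments. Unset Strict Implicit. Unset Printing Implicit Defensive.

Section PosetDefs.
Variables (T : finType) (le : rel T).

Definition plt (x y : T) : bool := (x != y) && le x y.
Definition pcomp (x y : T) : bool := le x y || le y x.

(* (B.1), (B.2), (B.3) *)
Definition basic (x : T) : bool :=
  [&& ~~ [exists u, exists v, [&& plt u x, plt v x & ~~ pcomp u v]],
      ~~ [exists u, exists v, [&& plt x u, plt x v & ~~ pcomp u v]] &
      ~~ [exists u, plt u x &&
            [forall w, ((w != u) && (w != x)) ==>
                       ((le w u == le w x) && (le u w == le x w))]]].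

Definition basics : {set T} := [set x | basic x].

Definition assoc (x : T) (B : {set T}) : bool :=
  (B \subset basics) && [forall b in basics, pcomp x b == (b \in B)].

Definition assoc_set (x : T) : {set T} := [set b in basics | pcomp x b].

Definition upper (u : T) : bool := ~~ basic u && [exists b in basics, plt b u].
Definition lower (u : T) : bool := ~~ basic u && [exists b in basics, plt u b].

Definition related (a : T) : {set T} :=
  if basic a then set0
  else if lower a then
    [set b | plt a b && ~~ [exists c, plt c b && ~~ pcomp c a]]
  else if upper a then
    [set b | plt b a && ~~ [exists c, plt b c && ~~ pcomp c a]]
      :\: [set l | lower l && assoc l (assoc_set a)]
  else set0.

Definition antichain (A : {set T}) : Prop :=
  forall x y, x \in A -> y \in A -> le x y -> x = y.

Definition maximal_antichain (A : {set T}) : Prop :=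
  antichain A /\ forall x, exists2 y, y \in A & pcomp x y.

End PosetDefs.

Definition sum_le (T1 T2 : finType) (le1 : rel T1) (le2 : rel T2) : rel (T1 + T2)%type :=
  fun x y => match x, y with
             | inl a, inl b => le1 a b
             | inr a, inr b => le2 a b
             | _, _ => false
             end.

(* adding a new greatest element (None) *)
Definition addtop (T : finType) (le : rel T) : rel (option T) :=
  fun x y => match x, y with
             | Some a, Some b => le a b
             | _, None => true
             | None, Some _ => false
             end.

Definition addbot (T : finType) (le : rel T) : rel (option T) :=
  fun x y => match x, y with
             | Some a, Some b => le a b
             | None, _ => true
             | Some _, None => false
             end.

(* V-posets, up to order isomorphism *)
Inductive isV : forall (T : finType), rel T -> Prop :=
| isV_empty : isV (fun _ _ : void => false)
| isV_union (T1 T2 : finType) (le1 : rel T1) (le2 : rel T2) :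
    isV le1 -> isV le2 -> isV (sum_le le1 le2)
| isV_top (T : finType) (le : rel T) : isV le -> isV (addtop le)
| isV_bot (T : finType) (le : rel T) : isV le -> isV (addbot le)
| isV_iso (T T' : finType) (le : rel T) (le' : rel T') (f : T -> T') :
    isV le -> bijective f -> (forall x y, le' (f x) (f y) = le x y) -> isV le'.

(* Main.v *)
From Pilot Require Import Defs.
From mathcomp Require Import all_boot.
Import Pilot.Defs.
Set Implicit Arguments. Unset Strict Implicit. Unset Printing Implicit Defensive.
Set Warnings "-notation-overridden".

Section Gen.
Variables (T : finType) (le : rel T).
Definition B1 x := forall u v, plt le u x -> plt le v x -> pcomp le u v.
Definition B2 x := forall u v, plt le x u -> plt le x v -> pcomp le u v.
Definition twin u x := forall w, w != u -> w != x -> le w u = le w x /\ le u w = le x w.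

Lemma basicP x : basic le x <-> [/\ B1 x, B2 x & ~ exists u, plt le u x /\ twin u x].
Proof.
split.
- case/and3P => h1 h2 h3; split.
  + move=> u v hu hv; apply/negPn/negP => nc; move/negP: h1; apply.
    by apply/existsP; exists u; apply/existsP; exists v; rewrite hu hv nc.
  + move=> u v hu hv; apply/negPn/negP => nc; move/negP: h2; apply.
    by apply/existsP; exists u; apply/existsP; exists v; rewrite hu hv nc.
  + case=> u [hu ht]; move/negP: h3; apply; apply/existsP; exists u; rewrite hu /=.
    apply/forallP => w; apply/implyP => /andP [wu wx]; have [e1 e2] := ht w wu wx.
    by rewrite e1 e2 !eqxx.
- case=> h1 h2 h3; apply/and3P; split.
  + apply/negP => /existsP [u /existsP [v /and3P [hu hv nc]]].
    by rewrite (h1 u v hu hv) in nc.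
  + apply/negP => /existsP [u /existsP [v /and3P [hu hv nc]]].
    by rewrite (h2 u v hu hv) in nc.
  + apply/negP => /existsP [u /andP [hu /forallP hw]]; apply: h3; exists u; split=> //.
    move=> w wu wx; move: (hw w); rewrite wu wx /= => /andP [/eqP -> /eqP ->]; done.
Qed.

Definition porder := [/\ reflexive le, antisymmetric le & transitive le].
Definition goodE := forall x : T, exists b, basic le b.
Definition goodG := forall x y, ~~ pcomp le x y -> exists2 b, basic le b & ~~ pcomp le x b.

Lemma pcompC x y : pcomp le x y = pcomp le y x.
Proof. by rewrite /pcomp orbC. Qed.
End Gen.

Section Top.
Variables (T : finType) (le : rel T).
Local Notation le' := (addtop le).
Lemma pltT_SS u x : plt le' (Some u) (Some x) = plt le u x. Proof. by []. Qed.
Lemma pltT_NS x : plt le' None (Some x) = false. Proof. by rewrite /plt /= ?andbF. Qed.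
Lemma pltT_SN x : plt le' (Some x) None = true. Proof. by []. Qed.
Lemma pltT_NN : plt le' None None = false. Proof. by []. Qed.
Lemma pcompT_SS u x : pcomp le' (Some u) (Some x) = pcomp le u x. Proof. by []. Qed.
Lemma pcompT_xN x : pcomp le' x None = true. Proof. by case: x. Qed.
Lemma pcompT_Nx x : pcomp le' None x = true. Proof. by case: x => //= ?; rewrite /pcomp /= orbT. Qed.

Lemma basicT_S x : basic le' (Some x) <-> basic le x.
Proof.
split.
- case/basicP=> h1 h2 h3; apply/basicP; split.
  + by move=> u v hu hv; have := h1 (Some u) (Some v); rewrite !pltT_SS pcompT_SS; apply.
  + by move=> u v hu hv; have := h2 (Some u) (Some v); rewrite !pltT_SS pcompT_SS; apply.
  + case=> u [hu ht]; apply: h3; exists (Some u); rewrite pltT_SS; split=> //.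
    by case=> [w|] wu wx //=; apply: ht.
- case/basicP=> h1 h2 h3; apply/basicP; split.
  + case=> [u|] [v|] //; rewrite ?pltT_SS ?pltT_NS //; apply: h1.
  + case=> [u|] [v|] //; rewrite ?pltT_SS ?pcompT_xN ?pcompT_Nx //; apply: h2.
  + case=> [[u|]] [hu ht]; last by rewrite pltT_NS in hu.
    apply: h3; exists u; split=> // w wu wx; exact: (ht (Some w) wu wx).
Qed.

Lemma basicT_N0 : (T -> False) -> basic le' None.
Proof.
move=> e; apply/basicP; split.
- by case=> [u|] [v|] //; case: (e u).
- by case=> [u|] [v|] //; case: (e u).
- by case=> [[u|] [hu _]] //; case: (e u).
Qed.

Section Ex.
Hypothesis po : porder le.
Lemma ex_max (Q : pred T) x0 : Q x0 ->
  exists m, Q m /\ forall w, Q w -> le m w -> w = m.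
Proof.
case: po => refl anti tr.
move=> Qx0.
pose F w := #|[set z | le z w]|.
case: (@arg_maxnP T x0 Q F Qx0) => m Qm mx; exists m; split=> // w Qw lmw.
apply/eqP; apply/negPn/negP => nwm.
have: F m < F w.
  rewrite /F; apply: proper_card; apply/properP; split.
    apply/subsetP => z; rewrite !inE => hz; exact: tr hz lmw.
  exists w; rewrite !inE ?refl //.
  apply/negP => lwm; have ewm : w = m by apply: anti; rewrite lwm lmw.
  by rewrite ewm eqxx in nwm.
by rewrite ltnNge => /negP; apply; exact: mx.
Qed.
End Ex.
End Top.

Section Top2.
Variables (T : finType) (le : rel T).
Local Notation le' := (addtop le).
Lemma basicT_Nn (po : porder le) (a : T) : ~~ basic le' None.
Proof.
have [m [_ mx]] := ex_max po (Q := predT) (x0 := a) isT.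
case: po => refl anti tr.
apply/negP => /basicP [h1 _ h3].
case: (boolP [exists y, ~~ pcomp le y m]).
  case/existsP => y nc; have := h1 (Some y) (Some m) (pltT_SN _ _) (pltT_SN _ _).
  by rewrite pcompT_SS (negbTE nc).
move=> /existsPn hall.
have allm y : le y m.
  have := hall y; rewrite negbK /pcomp; case/orP => // lmy.
  by rewrite (mx y isT lmy) refl.
apply: h3; exists (Some m); split; first exact: pltT_SN.
case=> [w|] // wm _ /=; split; first by rewrite allm.
case: (boolP (le m w)) => // lmw; move: (mx w isT lmw) => e.
by rewrite e eqxx in wm.
Qed.
End Top2.

Section Bot.
Variables (T : finType) (le : rel T).
Local Notation le' := (addbot le).
Lemma pltB_SS u x : plt le' (Some u) (Some x) = plt le u x. Proof. by []. Qed.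
Lemma pltB_SN x : plt le' (Some x) None = false. Proof. by rewrite /plt /= ?andbF. Qed.
Lemma pltB_NS x : plt le' None (Some x) = true. Proof. by []. Qed.
Lemma pltB_NN : plt le' None None = false. Proof. by []. Qed.
Lemma pcompB_SS u x : pcomp le' (Some u) (Some x) = pcomp le u x. Proof. by []. Qed.
Lemma pcompB_xN x : pcomp le' x None = true. Proof. by case: x => //= ?; rewrite /pcomp /= orbT. Qed.
Lemma pcompB_Nx x : pcomp le' None x = true. Proof. by case: x. Qed.

Lemma basicB_S1 x : basic le' (Some x) -> basic le x.
Proof.
case/basicP=> h1 h2 h3; apply/basicP; split.
+ by move=> u v hu hv; have := h1 (Some u) (Some v); rewrite !pltB_SS pcompB_SS; apply.
+ by move=> u v hu hv; have := h2 (Some u) (Some v); rewrite !pltB_SS pcompB_SS; apply.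
+ case=> u [hu ht]; apply: h3; exists (Some u); rewrite pltB_SS; split=> //.
  by case=> [w|] wu wx //=; apply: ht.
Qed.

Lemma basicB_S2 (refl : reflexive le) x :
  basic le x -> (exists w, ~~ le x w) -> basic le' (Some x).
Proof.
case/basicP=> h1 h2 h3 [w0 nw0]; apply/basicP; split.
+ case=> [u|] [v|] //; rewrite ?pltB_SS ?pcompB_xN ?pcompB_Nx //; apply: h1.
+ case=> [u|] [v|] //; rewrite ?pltB_SS ?pltB_SN //; apply: h2.
+ case=> [[u|]] [hu ht].
  - apply: h3; exists u; split=> // w wu wx; exact: (ht (Some w) wu wx).
  - have w0x : Some w0 != Some x.
      apply/negP => /eqP [] e; by rewrite e refl in nw0.
    have [_ e] := ht (Some w0) isT w0x.
    by move: e => /=; rewrite (negbTE nw0).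
Qed.

Lemma basicB_N : (forall u v, pcomp le u v) -> basic le' None.
Proof.
move=> ch; apply/basicP; split.
+ by case=> [u|] [v|].
+ case=> [u|] [v|] //; rewrite ?pltB_NN ?pcompB_SS //.
+ by case=> [[u|]] [hu _].
Qed.
End Bot.

Section Sum.
Variables (T1 T2 : finType) (le1 : rel T1) (le2 : rel T2).
Local Notation le' := (sum_le le1 le2).
Lemma basicU_l x : basic le' (inl x) <-> basic le1 x.
Proof.
split.
- case/basicP=> h1 h2 h3; apply/basicP; split.
  + by move=> u v hu hv; have := h1 (inl u) (inl v); apply.
  + by move=> u v hu hv; have := h2 (inl u) (inl v); apply.
  + case=> u [hu ht]; apply: h3; exists (inl u); split=> //.
    by case=> [w|w] wu wx //=; apply: ht.
- case/basicP=> h1 h2 h3; apply/basicP; split.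
  + by case=> [u|u] [v|v] //; rewrite /plt /= ?andbF //; apply: h1.
  + by case=> [u|u] [v|v] //; rewrite /plt /= ?andbF //; apply: h2.
  + case=> [[u|u]] [hu ht]; last by move: hu; rewrite /plt /= ?andbF.
    apply: h3; exists u; split=> // w wu wx; exact: (ht (inl w) wu wx).
Qed.
Lemma basicU_r x : basic le' (inr x) <-> basic le2 x.
Proof.
split.
- case/basicP=> h1 h2 h3; apply/basicP; split.
  + by move=> u v hu hv; have := h1 (inr u) (inr v); apply.
  + by move=> u v hu hv; have := h2 (inr u) (inr v); apply.
  + case=> u [hu ht]; apply: h3; exists (inr u); split=> //.
    by case=> [w|w] wu wx //=; apply: ht.
- case/basicP=> h1 h2 h3; apply/basicP; split.
  + by case=> [u|u] [v|v] //; rewrite /plt /= ?andbF //; apply: h1.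
  + by case=> [u|u] [v|v] //; rewrite /plt /= ?andbF //; apply: h2.
  + case=> [[u|u]] [hu ht]; first by move: hu; rewrite /plt /= ?andbF.
    apply: h3; exists u; split=> // w wu wx; exact: (ht (inr w) wu wx).
Qed.
End Sum.

Section Iso.
Variables (T T' : finType) (le : rel T) (le' : rel T') (f : T -> T').
Hypotheses (bf : bijective f) (hf : forall x y, le' (f x) (f y) = le x y).
Lemma pltI u x : plt le' (f u) (f x) = plt le u x.
Proof. by rewrite /plt hf (bij_eq bf). Qed.
Lemma pcompI u x : pcomp le' (f u) (f x) = pcomp le u x.
Proof. by rewrite /pcomp !hf. Qed.
Lemma basicI x : basic le' (f x) <-> basic le x.
Proof.
case: bf => g fK gK.
split.
- case/basicP=> h1 h2 h3; apply/basicP; split.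
  + by move=> u v hu hv; have := h1 (f u) (f v); rewrite !pltI pcompI; apply.
  + by move=> u v hu hv; have := h2 (f u) (f v); rewrite !pltI pcompI; apply.
  + case=> u [hu ht]; apply: h3; exists (f u); rewrite pltI; split=> //.
    move=> w; rewrite -(gK w) !(bij_eq bf) !hf; exact: ht.
- case/basicP=> h1 h2 h3; apply/basicP; split.
  + move=> u v; rewrite -(gK u) -(gK v) !pltI pcompI; exact: h1.
  + move=> u v; rewrite -(gK u) -(gK v) !pltI pcompI; exact: h2.
  + case=> u; rewrite -(gK u) pltI => [[hu ht]]; apply: h3; exists (g u); split=> //.
    move=> w wu wx; have := ht (f w); rewrite !(bij_eq bf) !hf; exact.
Qed.
End Iso.

Lemma chain_of_least (T : finType) (le : rel T) b :
  basic le b -> (forall w, le b w) -> forall u v, pcomp le u v.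
Proof.
case/basicP => _ h2 _ hb u v.
case: (eqVneq u b) => [->|ub]; first by rewrite /pcomp hb.
case: (eqVneq v b) => [->|vb]; first by rewrite /pcomp hb orbT.
by apply: h2; rewrite /plt ?hb eq_sym ?ub ?vb.
Qed.

Lemma isV_inv (T : finType) (le : rel T) :
  isV le -> [/\ porder le, goodE le & goodG le].
Proof.
elim=> {T le}.
- by split; [split; case | case | case].
- move=> T1 T2 le1 le2 _ [[r1 a1 t1] E1 G1] _ [[r2 a2 t2] E2 G2]; split.
  + split.
    * by case=> [x|x] /=; [apply: r1 | apply: r2].
    * by case=> [x|x] [y|y] //= h; [rewrite (a1 _ _ h) | rewrite (a2 _ _ h)].
    * by case=> [y|y] [x|x] [z|z] //=; [apply: t1 | apply: t2].
  + case=> [x|x].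
    * by have [b hb] := E1 x; exists (inl b); apply/basicU_l.
    * by have [b hb] := E2 x; exists (inr b); apply/basicU_r.
  + case=> [x|x] [y|y] nc.
    * by have [b hb nb] := G1 x y nc; exists (inl b) => //; apply/basicU_l.
    * by have [b hb] := E2 y; exists (inr b) => //; apply/basicU_r.
    * by have [b hb] := E1 y; exists (inl b) => //; apply/basicU_l.
    * by have [b hb nb] := G2 x y nc; exists (inr b) => //; apply/basicU_r.
- move=> T le _ [[r a t] E G]; split.
  + split.
    * by case=> [x|] /=.
    * by case=> [x|] [y|] //= h; rewrite (a _ _ h).
    * by case=> [y|] [x|] [z|] //=; apply: t.
  + move=> _; case: (pickP (@predT T)) => [x _ | e].
    * by have [b hb] := E x; exists (Some b); apply/basicT_S.
    * by exists None; apply: basicT_N0 => x; have := e x.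
  + case=> [x|] [y|] //; rewrite ?pcompT_xN ?pcompT_Nx // pcompT_SS => nc.
    by have [b hb nb] := G x y nc; exists (Some b) => //; apply/basicT_S.
- move=> T le _ [[r a t] E G]; split.
  + split.
    * by case=> [x|] /=.
    * by case=> [x|] [y|] //= h; rewrite (a _ _ h).
    * by case=> [y|] [x|] [z|] //=; apply: t.
  + move=> _; case: (pickP (@predT T)) => [x _ | e].
    * have [b hb] := E x.
      case: (boolP [exists w, ~~ le b w]) => [/existsP ex | /existsPn nex].
        by exists (Some b); apply: basicB_S2.
      exists None; apply: basicB_N; apply: (chain_of_least hb) => w.
      by have := nex w; rewrite negbK.
    * by exists None; apply: basicB_N => u; have := e u.
  + case=> [x|] [y|] //; rewrite ?pcompB_xN ?pcompB_Nx // pcompB_SS => nc.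
    have [b hb nb] := G x y nc.
    case: (boolP [exists w, ~~ le b w]) => [/existsP ex | /existsPn nex].
      by exists (Some b) => //; apply: basicB_S2.
    by have := nex x; rewrite negbK => lbx; rewrite /pcomp lbx orbT in nb.
- move=> T T' le le' f _ [[r a t] E G] bf hf; have [g fK gK] := bf; split.
  + split.
    * by move=> x; rewrite -(gK x) hf.
    * by move=> x y; rewrite -(gK x) -(gK y) !hf => /a ->.
    * by move=> y x z; rewrite -(gK x) -(gK y) -(gK z) !hf; apply: t.
  + move=> x; have [b hb] := E (g x); exists (f b); exact/(basicI bf hf).
  + move=> x y; rewrite -(gK x) -(gK y) (pcompI hf) => nc.
    have [b hb nb] := G _ _ nc; exists (f b); first exact/(basicI bf hf).
    by rewrite (pcompI hf).
Qed.

Lemma existsO (T : finType) (P : pred (option T)) :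
  [exists x, P x] = P None || [exists x, P (Some x)].
Proof.
apply/existsP/orP.
- by case=> [[x|] h]; [right; apply/existsP; exists x | left].
- by case=> [h | /existsP [x h]]; [exists None | exists (Some x)].
Qed.

Lemma noneS (T : finType) (S : {set T}) : (None \in Some @: S) = false.
Proof. by apply/imsetP => [[y _]]. Qed.

Lemma memS (T : finType) (S : {set T}) x : (Some x \in Some @: S) = (x \in S).
Proof. by rewrite mem_imset //; exact: Some_inj. Qed.

Lemma inB (T : finType) (le : rel T) x : (x \in basics le) = basic le x.
Proof. by rewrite inE. Qed.

Section Main.
Variables (T : finType) (le : rel T).
Hypothesis po : porder le.
Local Notation le' := (addtop le).

Lemma basicT_Sb x : basic le' (Some x) = basic le x.
Proof. by apply/idP/idP => /basicT_S. Qed.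

Lemma upperT a : upper le' (Some a) = upper le a.
Proof.
rewrite /upper basicT_Sb; congr (_ && _); apply/existsP/existsP.
- case=> [[b|]] /andP [hb hp]; last by rewrite pltT_NS in hp.
  by exists b; move: hb hp; rewrite !inB basicT_Sb pltT_SS => -> ->.
- case=> b /andP [hb hp]; exists (Some b).
  by rewrite pltT_SS hp andbT inB basicT_Sb -inB.
Qed.

Lemma lowerT (a0 : T) a : lower le' (Some a) = lower le a.
Proof.
rewrite /lower basicT_Sb; congr (_ && _); apply/existsP/existsP.
- case=> [[b|]] /andP [hb hp].
    by exists b; move: hb hp; rewrite !inB basicT_Sb pltT_SS => -> ->.
  by rewrite inB (negbTE (basicT_Nn po a0)) in hb.
- case=> b /andP [hb hp]; exists (Some b).
  by rewrite pltT_SS hp andbT inB basicT_Sb -inB.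
Qed.

Lemma lowerT_N : lower le' None = false.
Proof.
rewrite /lower; apply/negP => /andP [_ /existsP [[b|] /andP [_ h]]] //.
Qed.

Lemma assoc_setT a : assoc_set le' (Some a) = Some @: assoc_set le a.
Proof.
apply/setP => [[b|]]; rewrite ?memS ?noneS !inE ?basicT_Sb //.
by rewrite pcompT_xN andbT; apply/negP => hN; move/negP: (basicT_Nn po a).
Qed.

Lemma assocT (a0 : T) l (S : {set T}) : assoc le' (Some l) (Some @: S) = assoc le l S.
Proof.
have bN : basic le' None = false by apply/negbTE/(basicT_Nn po a0).
rewrite /assoc; congr (_ && _).
- apply/subsetP/subsetP => h.
  + move=> x xS; have := h (Some x); rewrite memS !inE basicT_Sb; exact.
  + case=> [x|]; rewrite ?memS ?noneS // !inE basicT_Sb => /h; by rewrite inE.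
- apply/forallP/forallP => h.
  + move=> x; have := h (Some x); by rewrite !inE basicT_Sb pcompT_SS memS.
  + case=> [x|]; first by have := h x; rewrite !inE basicT_Sb pcompT_SS memS.
    by rewrite inE bN.
Qed.

Lemma related_upT a : ~~ lower le a -> upper le a ->
  related le' (Some a) = Some @: related le a.
Proof.
move=> nl hu.
have nb : ~~ basic le a by case/andP: hu.
rewrite /related basicT_Sb (negbTE nb) (lowerT a) (negbTE nl) upperT hu.
apply/setP => [[b|]]; rewrite ?memS ?noneS !inE.
- rewrite (lowerT a) assoc_setT (assocT a) pltT_SS existsO /=.
  by [].
- by rewrite pltT_NS !andbF.
Qed.

Lemma related_lowT a : ~~ basic le a -> lower le a ->
  related le' (Some a) =
  if [forall c, pcomp le c a] then None |: Some @: related le a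
  else Some @: related le a.
Proof.
move=> nb hl.
rewrite /related basicT_Sb (negbTE nb) (lowerT a) hl.
have eS : forall b, (Some b \in [set b0 | plt le' (Some a) b0 &&
    ~~ [exists c, plt le' c b0 && ~~ pcomp le' c (Some a)]])
  = (b \in [set b0 | plt le a b0 &&
    ~~ [exists c, plt le c b0 && ~~ pcomp le c a]]).
  by move=> b; rewrite !inE pltT_SS existsO /=.
have eN : (None \in [set b0 | plt le' (Some a) b0 &&
    ~~ [exists c, plt le' c b0 && ~~ pcomp le' c (Some a)]])
  = [forall c, pcomp le c a].
  rewrite inE existsO /= negb_exists; apply/forallP/forallP => h c.
  + by have := h c; rewrite negbK.
  + by rewrite negbK; exact: (h c).
case: ifP => hf; apply/setP => [[b|]].
- by rewrite eS in_setU1 memS.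
- by rewrite eN hf in_setU1 eqxx.
- by rewrite eS memS.
- by rewrite eN hf noneS.
Qed.

Lemma no_mid b1 a b2 : basic le b1 -> basic le b2 -> plt le b1 a -> plt le a b2 ->
  ~ (forall c, pcomp le c a).
Proof.
case: po => refl anti tr.
move=> hb1 hb2 p1 p2 hall.
case/basicP: hb1 => _ B2b1 _; case/basicP: hb2 => B1b2 _ B3b2.
case/andP: p1 => n1 l1; case/andP: p2 => n2 l2.
have ch : forall u v, pcomp le u v.
  move=> u v; case/orP: (hall u) => hu; case/orP: (hall v) => hv.
  - apply: B1b2; rewrite /plt ?(tr _ _ _ hu l2) ?(tr _ _ _ hv l2) andbT.
      apply/negP => /eqP e; subst u; move/negP: n2; apply; apply/eqP/anti; by rewrite l2 hu.
    apply/negP => /eqP e; subst v; move/negP: n2; apply; apply/eqP/anti; by rewrite l2 hv.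
  - by rewrite /pcomp (tr _ _ _ hu hv).
  - by rewrite /pcomp (tr _ _ _ hv hu) orbT.
  - apply: B2b1; rewrite /plt ?(tr _ _ _ l1 hu) ?(tr _ _ _ l1 hv) andbT.
      apply/negP => /eqP e; subst u; move/negP: n1; apply; apply/eqP/anti; by rewrite l1 hu.
    apply/negP => /eqP e; subst v; move/negP: n1; apply; apply/eqP/anti; by rewrite l1 hv.
have [m [Qm mx]] := ex_max po (Q := fun w => plt le w b2) (x0 := a) (introT andP (conj n2 l2)).
apply: B3b2; exists m; split => // w wm wb.
case/andP: (Qm) => _ lm2.
split.
- apply/idP/idP => [h | h]; first exact: tr h lm2.
  case/orP: (ch w m) => // lmw.
  have := mx w; rewrite /plt wb h => /(_ isT lmw) e; by rewrite e eqxx in wm.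
- apply/idP/idP => [h | h]; last exact: tr lm2 h.
  case/orP: (ch w b2) => // lw2.
  have := mx w; rewrite /plt wb lw2 => /(_ isT h) e; by rewrite e eqxx in wm.
Qed.
End Main.

Theorem lemma3p15 (T : finType) (le : rel T) (A : {set T}) :
  isV le -> maximal_antichain le A ->
  (* (i) *)
  #|A :&: basics le| = #|(Some @: A) :&: basics (addtop le)| /\
  (* (ii) *)
  (forall a, a \in A -> upper le a ->
     related (addtop le) (Some a) = Some @: related le a) /\
  (* (iii) *)
  (forall a, a \in A -> lower le a -> ~~ assoc le a (basics le) ->
     related (addtop le) (Some a) = Some @: related le a) /\
  (* (iv) *)
  (forall a, a \in A -> lower le a -> assoc le a (basics le) ->
     related (addtop le) (Some a) = None |: (Some @: related le a)).
Proof.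
move=> hV _; have [po _ G] := isV_inv hV.
split; [|split; [|split]].
- have -> : (Some @: A) :&: basics (addtop le) = Some @: (A :&: basics le).
    apply/setP => [[x|]]; rewrite in_setI.
      by rewrite !memS in_setI !inB basicT_Sb.
    by rewrite !noneS.
  by rewrite card_imset //; exact: Some_inj.
- move=> a _ hu; have nb : ~~ basic le a by case/andP: hu.
  case hl: (lower le a); last by apply: related_upT => //; rewrite hl.
  rewrite related_lowT //; case: ifP => // /forallP hall.
  case/andP: hu => _ /existsP [b1 /andP [hb1 p1]].
  case/andP: hl => _ /existsP [b2 /andP [hb2 p2]].
  by case: (no_mid po (b1 := b1) (b2 := b2) (a := a)); rewrite -?inB.
- move=> a _ hl na; have nb : ~~ basic le a by case/andP: hl.
  rewrite related_lowT //; case: ifP => // /forallP hall.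
  case/negP: na; rewrite /assoc subxx /=; apply/forallP => b; apply/implyP => hb.
  by rewrite hb pcompC hall.
- move=> a _ hl ha; have nb : ~~ basic le a by case/andP: hl.
  rewrite related_lowT //; case: ifP => // /negbT /forallPn [c nc].
  rewrite pcompC in nc; have [b hb nab] := G _ _ nc.
  case/andP: ha => _ /forallP /(_ b); rewrite inB hb /= => /eqP.
  by rewrite (negbTE nab).
Qed.
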